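(* Let $E$ be the $k$-algebra generated by $t,w$ with relations $t^2=-t$ and $w^2=1$. Then the $k$-algebra homomorphism $E\to M_2(k[X])$ given by $$w\mapsto\begin{pmatrix}X&X^2-1\\-1&-X\end{pmatrix},\qquad t\mapsto\begin{pmatrix}0&0\\0&-1\end{pmatrix}$$ is injective, and it maps the centre $Z(E)$ isomorphically onto the scalar matrices $k[X]\cdot\mathrm{Id}$; in particular $Z(E)\cong k[X]$.
   Context: $k=\overline{\mathbb F}_p$. For a non-regular character $\xi$ of the finite torus $T(\mathbb F_q)$ of $\mathrm{PGL}_2$ (i.e. $\xi(\mathrm{diag}(a,b))=\xi(\mathrm{diag}(b,a))$), the block $e_\xi\mathcal H_{\mathrm{PGL}_2}$ of the pro-$p$ Iwahori–Hecke algebra of $\mathrm{PGL}_2(\mathfrak F)$ is isomorphic to $E$ via $t=e_\xi T_{s_0}$, $w=e_\xi T_\omega$, where $\omega$ is the image of $\begin{psmallmatrix}0&\varpi\\1&0\end{psmallmatrix}$ and $s_0=\begin{psmallmatrix}0&1\\1&0\end{psmallmatrix}$; a $k$-basis of $E$ is $1$, $(wt)^n$, $(tw)^n$, $w(tw)^{n-1}$, $t(wt)^{n-1}$ ($n\ge1$). *)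

(* Defs.v *)
From HB Require Import structures.
From mathcomp Require Import all_boot all_order all_algebra.
Set Implicit Arguments. Unset Strict Implicit. Unset Printing Implicit Defensive.
Import GRing.Theory.
Local Open Scope ring_scope.

(* A word is a sequence of letters; [true] stands for t, [false] for w.
   An element of the free algebra is represented by a formal finite sum
   of (coefficient, word) pairs; two formal sums denote the same element
   iff their coefficient functions [fa_coef] agree. *)
Definition word := seq bool.
Definition lt : word := [:: true].
Definition lw : word := [:: false].

Section FreeAlg.
Variable k : fieldType.

Definition fa := seq (k * word).

Definition fa_coef (x : fa) (u : word) : k :=
  \sum_(p <- x | p.2 == u) p.1.

Definition fa_opp (x : fa) : fa := [seq (- p.1, p.2) | p <- x].
Definition fa_sub (x y : fa) : fa := x ++ fa_opp y.
Definition fa_mul (x y : fa) : fa :=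
  [seq (a.1 * b.1, a.2 ++ b.2) | a <- x, b <- y].

(* u * r * v scaled by c, with r the relator t^2 + t (b = true)
   or w^2 - 1 (b = false). *)
Definition relator_term (q : k * word * bool * word) : fa :=
  let: (c, u, b, v) := q in
  if b then [:: (c, u ++ [:: true; true] ++ v); (c, u ++ [:: true] ++ v)]
  else [:: (c, u ++ [:: false; false] ++ v); (- c, u ++ v)].

Definition in_rel_ideal (x : fa) : Prop :=
  exists s : seq (k * word * bool * word),
    forall z, fa_coef x z = fa_coef (flatten (map relator_term s)) z.

(* equality in E = k<t,w> / I *)
Definition E_eq (x y : fa) : Prop := in_rel_ideal (fa_sub x y).

Definition E_central (x : fa) : Prop := forall y, E_eq (fa_mul x y) (fa_mul y x).

Definition Wmat : 'M[{poly k}]_2 :=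
  \matrix_(i < 2, j < 2)
    if (val i == 0%N) && (val j == 0%N) then 'X
    else if (val i == 0%N) then 'X ^+ 2 - 1
    else if (val j == 0%N) then -1
    else - 'X.

Definition Tmat : 'M[{poly k}]_2 :=
  \matrix_(i < 2, j < 2) if (val i == 1%N) && (val j == 1%N) then -1 else 0.

Definition phi_word (u : word) : 'M[{poly k}]_2 :=
  \prod_(b <- u) (if b then Tmat else Wmat).

Definition phi (x : fa) : 'M[{poly k}]_2 :=
  \sum_(p <- x) (p.1%:P)%:M * phi_word p.2.

End FreeAlg.

(* Main.v *)
Require Import Defs.
From HB Require Import structures.
From mathcomp Require Import all_boot all_order all_algebra.
From mathcomp Require Import ring.
Import GRing.Theory.
Local Open Scope ring_scope.
Set Implicit Arguments. Unset Strict Implicit. Unset Printing Implicit Defensive.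


Section S.
Variable k : fieldType.
Local Notation fa := (fa k).
Local Notation coef := (@fa_coef k).

Lemma fcE (x : fa) z : coef x z = \sum_(p <- x) (if p.2 == z then p.1 else 0).
Proof. by rewrite /fa_coef big_mkcond. Qed.
Lemma fc_nil z : coef [::] z = 0.
Proof. by rewrite fcE big_nil. Qed.
Lemma fc_cons p x z : coef (p :: x) z = (if p.2 == z then p.1 else 0) + coef x z.
Proof. by rewrite !fcE big_cons. Qed.
Lemma fc_cat x y z : coef (x ++ y) z = coef x z + coef y z.
Proof. by rewrite !fcE big_cat. Qed.
Lemma fc_opp x z : coef (fa_opp x) z = - coef x z.
Proof. rewrite !fcE big_map -sumrN; apply: eq_bigr => p _ /=; by case: ifP; rewrite ?oppr0. Qed.
Definition fa_scale (c : k) (x : fa) : fa := [seq (c * p.1, p.2) | p <- x].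
Lemma fc_scale c x z : coef (fa_scale c x) z = c * coef x z.
Proof. rewrite !fcE big_map mulr_sumr; apply: eq_bigr => p _ /=; by case: ifP; rewrite ?mulr0. Qed.
Lemma fc_flatten (T : Type) (f : T -> fa) s z : coef (flatten (map f s)) z = \sum_(i <- s) coef (f i) z.
Proof. elim: s => [|a s IH] /=; by rewrite ?big_nil ?fc_nil // big_cons fc_cat IH. Qed.

Lemma split_sum (a b : word) (ca cb : k) z :
  \sum_(i < (size z).+1) (if a == take i z then ca else 0) * (if b == drop i z then cb else 0)
  = if a ++ b == z then ca * cb else 0.
Proof.
case: eqP => [<-|hne].
  have hi : (size a < (size (a ++ b)).+1)%N by rewrite ltnS size_cat leq_addr.
  rewrite (bigD1 (Ordinal hi)) //= take_size_cat // drop_size_cat // !eqxx big1 ?addr0 //.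
  move=> i hi'; case: eqP => [ha|]; last by rewrite mul0r.
  exfalso; move: hi'; rewrite -val_eqE /=.
  have := congr1 size ha; rewrite size_takel; last by rewrite -ltnS ltn_ord.
  by move=> ->; rewrite eqxx.
apply: big1 => i _; case: eqP => [ha|]; last by rewrite mul0r.
case: eqP => [hb|]; last by rewrite mulr0.
by case: hne; rewrite ha hb cat_take_drop.
Qed.

Lemma fc_mul x y z : coef (fa_mul x y) z =
  \sum_(i < (size z).+1) coef x (take i z) * coef y (drop i z).
Proof.
rewrite fcE /fa_mul big_allpairs_dep /=.
symmetry.
under eq_bigr => i _ do rewrite !fcE big_distrl /=.
rewrite exchange_big /=. apply: eq_bigr => a _.
under eq_bigr => i _ do rewrite big_distrr /=.
rewrite exchange_big /=. apply: eq_bigr => b _ /=.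
by rewrite split_sum.
Qed.


Definition feq (x y : fa) := forall z, coef x z = coef y z.
Definition F (s : seq (k * word * bool * word)) : fa := flatten (map (@relator_term k) s).
Local Notation I := (@in_rel_ideal k).

Lemma feq_refl x : feq x x. Proof. by []. Qed.
Lemma feq_sym x y : feq x y -> feq y x. Proof. by move=> h z; rewrite h. Qed.
Lemma feq_trans x y z : feq x y -> feq y z -> feq x z. Proof. by move=> h1 h2 u; rewrite h1 h2. Qed.

Lemma I_feq x y : feq x y -> I x -> I y.
Proof. by move=> h [s hs]; exists s => z; rewrite -h. Qed.
Lemma I_nil : I [::].
Proof. by exists [::] => z; rewrite /= fc_nil. Qed.
Lemma I_zero x : feq x [::] -> I x.
Proof. move=> h; apply: I_feq I_nil; exact: feq_sym. Qed.
Lemma I_cat x y : I x -> I y -> I (x ++ y).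
Proof.
move=> [s1 h1] [s2 h2]; exists (s1 ++ s2) => z.
by rewrite fc_cat h1 h2 map_cat flatten_cat fc_cat.
Qed.
Definition scaleq (c : k) (q : k * word * bool * word) :=
  let: (c', u, b, v) := q in (c * c', u, b, v).
Lemma I_scale c x : I x -> I (fa_scale c x).
Proof.
move=> [s h]; exists (map (scaleq c) s) => z.
rewrite fc_scale h !fc_flatten big_map mulr_sumr; apply: eq_bigr => -[[[c' u] b] v] _.
case: b; rewrite /= !fc_cons !fc_nil; by case: ifP => _ /=; case: ifP => _ /=; ring.
Qed.
Lemma I_opp x : I x -> I (fa_opp x).
Proof.
move=> h; apply: (I_feq _ (I_scale (-1) h)) => z.
by rewrite fc_scale fc_opp mulN1r.
Qed.

Lemma mul_feq x x' y y' : feq x x' -> feq y y' -> feq (fa_mul x y) (fa_mul x' y').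
Proof. move=> h1 h2 z; rewrite !fc_mul; apply: eq_bigr => i _; by rewrite h1 h2. Qed.
Lemma mul_catl x1 x2 y : feq (fa_mul (x1 ++ x2) y) (fa_mul x1 y ++ fa_mul x2 y).
Proof.
move=> z; rewrite fc_cat !fc_mul -big_split; apply: eq_bigr => i _ /=.
by rewrite fc_cat mulrDl.
Qed.
Lemma mul_catr x y1 y2 : feq (fa_mul x (y1 ++ y2)) (fa_mul x y1 ++ fa_mul x y2).
Proof.
move=> z; rewrite fc_cat !fc_mul -big_split; apply: eq_bigr => i _ /=.
by rewrite fc_cat mulrDr.
Qed.
Lemma mul_nill y : feq (fa_mul [::] y) [::].
Proof. by move=> z. Qed.
Lemma mul_nilr x : feq (fa_mul x [::]) [::].
Proof.
move=> z; rewrite fc_mul fc_nil big1 // => i _; by rewrite fc_nil mulr0.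
Qed.

Lemma I_mul_rel_r q y : I (fa_mul (relator_term q) y).
Proof.
case: q => [[[c u] bb] v].
elim: y => [|b y IH]; first by apply: I_zero; apply: mul_nilr.
apply: I_feq (feq_sym (mul_catr _ [:: b] y)) _; apply: I_cat => //.
case: b => c' v'.
exists [:: (c * c', u, bb, v ++ v')] => z.
by case: (bb) IH; rewrite /= !fc_cons !fc_nil -!catA /= ?mulNr.
Qed.
Lemma I_mul_rel_l q y : I (fa_mul y (relator_term q)).
Proof.
case: q => [[[c u] bb] v].
elim: y => [|b y IH]; first by apply: I_zero; apply: mul_nill.
apply: I_feq (feq_sym (mul_catl [:: b] y _)) _; apply: I_cat => //.
case: b => c' v'.
exists [:: (c' * c, v' ++ u, bb, v)] => z.
by case: (bb) IH; rewrite /= !fc_cons !fc_nil -!catA /= ?mulrN.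
Qed.
Lemma I_mulr x y : I x -> I (fa_mul x y).
Proof.
move=> [s h]; apply: (I_feq (mul_feq (feq_sym h) (feq_refl y))); clear h.
elim: s => [|q s IH]; first by apply: I_zero; apply: mul_nill.
apply: I_feq (feq_sym (mul_catl _ _ _)) _; apply: I_cat => //; exact: I_mul_rel_r.
Qed.
Lemma I_mull x y : I x -> I (fa_mul y x).
Proof.
move=> [s h]; apply: (I_feq (mul_feq (feq_refl y) (feq_sym h))); clear h.
elim: s => [|q s IH]; first by apply: I_zero; apply: mul_nilr.
apply: I_feq (feq_sym (mul_catr _ _ _)) _; apply: I_cat => //; exact: I_mul_rel_l.
Qed.

Local Notation Eeq := (@E_eq k).
Lemma Eeq_I x y : Eeq x y <-> I (fa_sub x y). Proof. by []. Qed.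
Lemma feq_Eeq x y : feq x y -> Eeq x y.
Proof. move=> h; apply: I_zero => z; by rewrite fc_cat fc_opp h subrr fc_nil. Qed.
Lemma Eeq_refl x : Eeq x x. Proof. exact: feq_Eeq. Qed.
Lemma Eeq_sym x y : Eeq x y -> Eeq y x.
Proof.
move=> h; apply: (I_feq _ (I_opp h)) => z.
by rewrite fc_opp !fc_cat !fc_opp opprD opprK addrC.
Qed.
Lemma Eeq_trans x y z : Eeq x y -> Eeq y z -> Eeq x z.
Proof.
move=> h1 h2; apply: (I_feq _ (I_cat h1 h2)) => u.
rewrite !fc_cat !fc_opp; ring.
Qed.
Lemma Eeq_cat x x' y y' : Eeq x x' -> Eeq y y' -> Eeq (x ++ y) (x' ++ y').
Proof.
move=> h1 h2; apply: (I_feq _ (I_cat h1 h2)) => u.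
rewrite !fc_cat !fc_opp !fc_cat; ring.
Qed.
Lemma Eeq_scale c x y : Eeq x y -> Eeq (fa_scale c x) (fa_scale c y).
Proof.
move=> h; apply: (I_feq _ (I_scale c h)) => u.
rewrite !fc_scale !fc_cat !fc_opp !fc_scale; ring.
Qed.
Lemma Eeq_opp x y : Eeq x y -> Eeq (fa_opp x) (fa_opp y).
Proof.
move=> h; apply: (I_feq _ (I_opp h)) => u.
rewrite !fc_opp !fc_cat !fc_opp; ring.
Qed.
Lemma Eeq_mulr x x' y : Eeq x x' -> Eeq (fa_mul x y) (fa_mul x' y).
Proof.
move=> h; apply: (I_feq _ (I_mulr y h)) => u.
rewrite fc_cat fc_opp !fc_mul -sumrB; apply: eq_bigr => i _.
rewrite fc_cat fc_opp; ring.
Qed.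
Lemma Eeq_mull x x' y : Eeq x x' -> Eeq (fa_mul y x) (fa_mul y x').
Proof.
move=> h; apply: (I_feq _ (I_mull y h)) => u.
rewrite fc_cat fc_opp !fc_mul -sumrB; apply: eq_bigr => i _.
rewrite fc_cat fc_opp; ring.
Qed.
Lemma Eeq_feql x x' y : feq x x' -> Eeq x y -> Eeq x' y.
Proof. move=> h; apply: Eeq_trans; apply: feq_Eeq; exact: feq_sym. Qed.
Lemma Eeq_feqr x y y' : feq y y' -> Eeq x y -> Eeq x y'.
Proof. move=> h h'; apply: Eeq_trans h' _; exact: feq_Eeq. Qed.

Lemma Gt c u v : Eeq [:: (c, u ++ [:: true; true] ++ v)] [:: (- c, u ++ [:: true] ++ v)].
Proof. exists [:: (c, u, true, v)] => z; by rewrite /fa_sub /fa_opp /= opprK. Qed.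
Lemma Gw c u v : Eeq [:: (c, u ++ [:: false; false] ++ v)] [:: (c, u ++ v)].
Proof. by exists [:: (c, u, false, v)]. Qed.

End S.

Section S2.
Variable k : fieldType.
Local Notation fa := (fa k).
Local Notation coef := (@fa_coef k).
Implicit Types (x y e : fa) (p q : {poly k}) (z : word).
Definition wd (u : word) : fa := [:: (1, u)].
Definition e_one := wd [::].
Definition zeta : fa := [:: (1, [:: false]); (1, [:: false; true]); (1, [:: true; false])].

Ltac conc := let z := fresh "z" in intro z; rewrite /F /fa_sub /fa_opp /=; rewrite !fc_cons fc_nil;
  case: z => [|[] [|[] [|[] [|[] [|? ?]]]]] /=; ring.

Lemma Zt : E_eq (fa_mul (wd [:: true]) zeta) (fa_mul zeta (wd [:: true])).
Proof.
exists [:: (1, [::], true, [:: false]); (-1, [:: false], true, [::])].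
conc.
Qed.

Lemma Zw : E_eq (fa_mul (wd [:: false]) zeta) (fa_mul zeta (wd [:: false])).
Proof.
exists [:: (1, [::], false, [:: true]); (-1, [:: true], false, [::])].
conc.
Qed.

Lemma mul_cons (a : k * word) (x y : fa) :
  fa_mul (a :: x) y = map (fun b => (a.1 * b.1, a.2 ++ b.2)) y ++ fa_mul x y.
Proof. by []. Qed.
Lemma mul_cat_l (x1 x2 y : fa) : fa_mul (x1 ++ x2) y = fa_mul x1 y ++ fa_mul x2 y.
Proof. elim: x1 => [|a x1 IH] //=; by rewrite !mul_cons IH catA. Qed.
Lemma mul_map (a : k * word) (y z : fa) :
  fa_mul (map (fun b => (a.1 * b.1, a.2 ++ b.2)) y) z =
  map (fun b => (a.1 * b.1, a.2 ++ b.2)) (fa_mul y z).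
Proof.
elim: y => [|b y IH] //=; rewrite !mul_cons IH map_cat -map_comp; congr (_ ++ _).
by apply: eq_map => c /=; rewrite mulrA catA.
Qed.
Lemma fa_mulA (x y z : fa) : fa_mul (fa_mul x y) z = fa_mul x (fa_mul y z).
Proof. elim: x => [|a x IH] //=; by rewrite !mul_cons mul_cat_l mul_map IH. Qed.

Definition lm (b : bool) (x : fa) := fa_mul (wd [:: b]) x.
Definition zp i e := iter i (fa_mul zeta) e.

Lemma Zb b : E_eq (fa_mul (wd [:: b]) zeta) (fa_mul zeta (wd [:: b])).
Proof. case: b; [exact: Zt | exact: Zw]. Qed.

Lemma lm_zp b i e : E_eq (lm b (zp i e)) (zp i (lm b e)).
Proof.
elim: i => [|i IH] /=; first exact: Eeq_refl.
rewrite /lm -fa_mulA; apply: Eeq_trans (Eeq_mulr _ (Zb b)) _.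
rewrite fa_mulA; exact: Eeq_mull.
Qed.

Lemma mul_oppr x y : feq (fa_mul x (fa_opp y)) (fa_opp (fa_mul x y)).
Proof.
move=> z; rewrite fc_opp !fc_mul -sumrN; apply: eq_bigr => i _; by rewrite fc_opp mulrN.
Qed.
Lemma mul_scaler c x y : feq (fa_mul x (fa_scale c y)) (fa_scale c (fa_mul x y)).
Proof.
move=> z; rewrite fc_scale !fc_mul mulr_sumr; apply: eq_bigr => i _; by rewrite fc_scale mulrCA.
Qed.
Lemma zp_feq i e e' : feq e e' -> feq (zp i e) (zp i e').
Proof. elim: i => [|i IH] //= h; apply: mul_feq => //; exact: IH. Qed.
Lemma zp_cat i e1 e2 : feq (zp i (e1 ++ e2)) (zp i e1 ++ zp i e2).
Proof.
elim: i => [|i IH] //=; apply: feq_trans (mul_catr _ _ _).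
exact: mul_feq.
Qed.
Lemma zp_opp i e : feq (zp i (fa_opp e)) (fa_opp (zp i e)).
Proof.
elim: i => [|i IH] //=; apply: feq_trans (mul_oppr _ _).
exact: mul_feq.
Qed.
Lemma zp_Eeq i e e' : E_eq e e' -> E_eq (zp i e) (zp i e').
Proof. elim: i => [|i IH] //= h; apply: Eeq_mull; exact: IH. Qed.

Definition P (p : {poly k}) (e : fa) : fa :=
  flatten [seq fa_scale p`_i (zp i e) | i <- iota 0 (size p)].

Lemma fc_P p e z : coef (P p e) z = \sum_(i <- iota 0 (size p)) p`_i * coef (zp i e) z.
Proof. rewrite /P fc_flatten; apply: eq_bigr => i _; exact: fc_scale. Qed.
Lemma fc_P_ge N p e z : (size p <= N)%N ->
  coef (P p e) z = \sum_(i <- iota 0 N) p`_i * coef (zp i e) z.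
Proof.
move=> hN; rewrite fc_P -(subnKC hN) iotaD big_cat /=.
rewrite [X in _ = _ + X]big1_seq ?addr0 // => i /andP [_]; rewrite mem_iota => /andP [hi _].
by rewrite nth_default ?mul0r.
Qed.
Lemma P0 e : P 0 e = [::].
Proof. by rewrite /P size_poly0. Qed.
Lemma P_add p q e : feq (P p e ++ P q e) (P (p + q) e).
Proof.
move=> z; rewrite fc_cat !(@fc_P_ge (maxn (size p) (size q))) ?leq_maxl ?leq_maxr ?size_polyD //.
rewrite -big_split; apply: eq_bigr => i _; by rewrite coefD mulrDl.
Qed.
Lemma P_opp p e : feq (fa_opp (P p e)) (P (- p) e).
Proof.
move=> z; rewrite fc_opp !fc_P size_polyN -sumrN; apply: eq_bigr => i _; by rewrite coefN mulNr.
Qed.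
Lemma P_cat_e p e1 e2 : feq (P p (e1 ++ e2)) (P p e1 ++ P p e2).
Proof.
move=> z; rewrite fc_cat !fc_P -big_split; apply: eq_bigr => i _.
by rewrite zp_cat fc_cat mulrDr.
Qed.
Lemma P_opp_e p e : feq (P p (fa_opp e)) (P (- p) e).
Proof.
apply: feq_trans (P_opp p e) => z; rewrite fc_opp !fc_P -sumrN; apply: eq_bigr => i _.
by rewrite zp_opp fc_opp mulrN.
Qed.
Lemma P_feq_e p e e' : feq e e' -> feq (P p e) (P p e').
Proof. move=> h z; rewrite !fc_P; apply: eq_bigr => i _; by rewrite (zp_feq i h). Qed.
Lemma size_Xmul (p : {poly k}) : leq (size ('X * p)) (size p).+1.
Proof.
have [->|hp] := eqVneq p 0; first by rewrite mulr0 size_poly0.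
by rewrite mulrC size_mulX.
Qed.
Lemma P_zeta p e : feq (P p (fa_mul zeta e)) (P ('X * p) e).
Proof.
move=> z; rewrite fc_P (@fc_P_ge (size p).+1) ?size_Xmul //=.
rewrite big_cons coefXM /= mul0r add0r -[1%N]addn0 iotaDl big_map; apply: eq_bigr => i _.
by rewrite coefXM add1n /= /zp -iterSr.
Qed.
Lemma Eeq_flat (T : Type) (f g : T -> fa) s : (forall i, E_eq (f i) (g i)) ->
  E_eq (flatten (map f s)) (flatten (map g s)).
Proof. move=> h; elim: s => [|a s IH] /=; [exact: Eeq_refl | exact: Eeq_cat]. Qed.
Lemma P_Eeq_e p e e' : E_eq e e' -> E_eq (P p e) (P p e').
Proof. move=> h; apply: Eeq_flat => i; apply: Eeq_scale; exact: zp_Eeq. Qed.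
Lemma lm_cat b x y : feq (lm b (x ++ y)) (lm b x ++ lm b y).
Proof. exact: mul_catr. Qed.
Lemma lm_P b p e : E_eq (lm b (P p e)) (P p (lm b e)).
Proof.
rewrite /P; elim: (iota 0 (size p)) => [|i s IH] /=; first exact: Eeq_refl.
apply: Eeq_feql (feq_sym (lm_cat _ _ _)) _; apply: Eeq_cat => //.
apply: Eeq_feql (feq_sym (mul_scaler _ _ _)) _; apply: Eeq_scale; exact: lm_zp.
Qed.

Definition e_t : fa := wd [:: true].
Definition e_tw : fa := wd [:: true; false].
Definition e_wt : fa := wd [:: false; true].

Lemma L1 : E_eq (lm true e_one) e_t.
Proof. exists [::]; conc. Qed.
Lemma L2 : E_eq (lm true e_t) (fa_opp e_t).
Proof. exists [:: (1, [::], true, [::])]; conc. Qed.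
Lemma L3 : E_eq (lm true e_tw) (fa_opp e_tw).
Proof. exists [:: (1, [::], true, [:: false])]; conc. Qed.
Lemma L4 : E_eq (lm true e_wt) (fa_mul zeta e_t).
Proof. exists [:: (-1, [:: false], true, [::])]; conc. Qed.
Lemma L5 : E_eq (lm false e_one) (fa_mul zeta e_one ++ fa_opp e_wt ++ fa_opp e_tw).
Proof. exists [::]; conc. Qed.
Lemma L6 : E_eq (lm false e_t) e_wt.
Proof. exists [::]; conc. Qed.
Lemma L7 : E_eq (lm false e_tw) (fa_mul zeta (fa_mul zeta e_one) ++ fa_opp (fa_mul zeta e_wt)
   ++ fa_opp (fa_mul zeta e_tw) ++ fa_opp e_one ++ fa_opp e_t).
Proof. exists [:: (-1, [::], false, [::]); (-1, [:: true], false, [::])]; conc. Qed.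
Lemma L8 : E_eq (lm false e_wt) e_t.
Proof. exists [:: (1, [::], false, [:: true])]; conc. Qed.
End S2.

Section S3.
Variable k : fieldType.
Local Notation fa := (fa k).
Local Notation coef := (@fa_coef k).
Local Notation M2 := ('M[{poly k}]_2).
Implicit Types (x y e : fa) (p q : {poly k}) (z : word) (A B M : M2).
Local Notation sc c := ((c%:P)%:M : M2).
Local Notation pw := (@phi_word k).

Lemma phi_nil : phi [::] = 0 :> M2. Proof. by rewrite /phi big_nil. Qed.
Lemma phi_cons (a : k * word) x : phi (a :: x) = sc a.1 * pw a.2 + phi x.
Proof. by rewrite /phi big_cons. Qed.
Lemma phi_cat x y : phi (x ++ y) = phi x + phi y. Proof. by rewrite /phi big_cat. Qed.
Lemma pw_cat u v : pw (u ++ v) = pw u * pw v. Proof. by rewrite /phi_word big_cat. Qed.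
Lemma pw_nil : pw [::] = 1. Proof. by rewrite /phi_word big_nil. Qed.
Lemma pw_cons b u : pw (b :: u) = (if b then Tmat k else Wmat k) * pw u.
Proof. by rewrite /phi_word big_cons. Qed.
Lemma scD a b : sc (a + b) = sc a + sc b. Proof. by rewrite !raddfD. Qed.
Lemma scN a : sc (- a) = - sc a. Proof. by rewrite !raddfN. Qed.
Lemma scM a b : sc (a * b) = sc a * sc b. Proof. by rewrite polyCM scalar_mxM. Qed.
Lemma sc1 : sc 1 = 1. Proof. by []. Qed.
Lemma scC a A : sc a * A = A * sc a. Proof. by rewrite -!mulmxE scalar_mxC. Qed.

Lemma phi_opp x : phi (fa_opp x) = - phi x.
Proof. rewrite /phi big_map -sumrN; apply: eq_bigr => a _ /=; by rewrite scN mulNr. Qed.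
Lemma phi_scale c x : phi (fa_scale c x) = sc c * phi x.
Proof. rewrite /phi big_map mulr_sumr; apply: eq_bigr => a _ /=; by rewrite scM mulrA. Qed.
Lemma phi_mul x y : phi (fa_mul x y) = phi x * phi y.
Proof.
rewrite /phi /fa_mul big_allpairs_dep mulr_suml; apply: eq_bigr => a _.
rewrite mulr_sumr; apply: eq_bigr => b _ /=.
rewrite scM pw_cat -!mulrA; congr (_ * _); rewrite !mulrA; congr (_ * _); exact: scC.
Qed.

Lemma phi_zero x : feq x [::] -> phi x = 0.
Proof.
have [n] := ubnP (size x); elim: n x => // n IH [|[c u] x] //= hs hx.
  by rewrite phi_nil.
rewrite /phi (bigID (fun p : k * word => p.2 == u)) /=.
have -> : \sum_(p <- (c, u) :: x | p.2 == u) sc p.1 * pw p.2 =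
          sc (coef ((c, u) :: x) u) * pw u.
  rewrite /fa_coef raddf_sum /= raddf_sum /= mulr_suml.
  by apply: eq_bigr => p /eqP ->.
rewrite hx fc_nil !raddf0 mul0r add0r -big_filter /= eqxx /=.
apply: IH; first by rewrite size_filter (leq_ltn_trans (count_size _ _)).
move=> z; rewrite fc_nil /fa_coef big_filter_cond /=.
have [->|hzu] := eqVneq z u.
  by rewrite big1 // => p /andP [/negbTE ->].
have := hx z; rewrite fc_nil fc_cons /= (eq_sym u z) (negbTE hzu) add0r => hxz.
transitivity (coef x z); last exact: hxz.
rewrite /fa_coef; apply: eq_bigl => p; case: (eqVneq p.2 z) => [->|]; by rewrite ?hzu ?andbF.
Qed.

Lemma phi_feq x y : feq x y -> phi x = phi y.
Proof.
move=> h; apply/eqP; rewrite -subr_eq0 -phi_opp -phi_cat; apply/eqP; apply: phi_zero.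
by move=> z; rewrite fc_cat fc_opp h subrr fc_nil.
Qed.

Lemma TT : Tmat k * Tmat k = - Tmat k.
Proof.
apply/matrixP => i j; rewrite -mulmxE !mxE !big_ord_recl big_ord0 !mxE /=.
case: i => [[|[|i]] hi] //=; case: j => [[|[|j]] hj] //=; ring.
Qed.
Lemma WW : Wmat k * Wmat k = 1.
Proof.
apply/matrixP => i j; rewrite -mulmxE !mxE !big_ord_recl big_ord0 !mxE /=.
case: i => [[|[|i]] hi] //=; case: j => [[|[|j]] hj] //=; ring.
Qed.

Lemma phi_rel (q : k * word * bool * word) : phi (relator_term q) = 0.
Proof.
case: q => [[[c u] b] v]; case: b => /=; rewrite !phi_cons phi_nil addr0 /= !pw_cat.
  by rewrite !pw_cons [Tmat k * (_ * _)]mulrA TT mulNr !mulrN addNr.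
by rewrite !pw_cons [Wmat k * (_ * _)]mulrA WW mul1r scN mulNr addrN.
Qed.
Lemma phi_F (s : seq (k * word * bool * word)) : phi (F s) = 0.
Proof.
elim: s => [|r s IH]; first by rewrite /= phi_nil.
by rewrite /F /= phi_cat phi_rel add0r.
Qed.
Lemma phi_wd x y : E_eq x y -> phi x = phi y.
Proof.
move=> [s h]; have := phi_feq h; rewrite phi_F /fa_sub phi_cat phi_opp => /eqP.
by rewrite subr_eq0 => /eqP.
Qed.
End S3.

Section S4.
Variable k : fieldType.
Local Notation fa := (fa k).
Local Notation coef := (@fa_coef k).
Local Notation M2 := ('M[{poly k}]_2).
Implicit Types (x y e : fa) (p q : {poly k}) (z : word) (A B M N : M2).
Local Notation sc c := ((c%:P)%:M : M2).
Local Notation pw := (@phi_word k).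
Local Notation e_one := (@e_one k).
Local Notation zeta := (@zeta k).
Local Notation e_t := (@e_t k).
Local Notation e_tw := (@e_tw k).
Local Notation e_wt := (@e_wt k).

Definition i0 : 'I_2 := ord0.
Definition i1 : 'I_2 := lift ord0 ord0.
Definition dd : {poly k} := 'X ^+ 2 - 1.
Lemma dd_neq0 : dd != 0.
Proof.
apply/negP => /eqP h; have := congr1 (horner^~ 0) h; rewrite /dd !hornerE /= => /eqP.
by rewrite expr0n /= add0r oppr_eq0 oner_eq0.
Qed.
Lemma mulE A B i j : (A * B) i j = A i i0 * B i0 j + A i i1 * B i1 j.
Proof. by rewrite -mulmxE mxE !big_ord_recl big_ord0 addr0. Qed.

Definition r1 M := M i0 i0.
Definition r3 M := M i1 i0.
Definition r4 M := - (M i0 i1 %/ dd).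
Definition r2 M := r1 M + 'X * r3 M + 'X * r4 M - M i1 i1.
Definition Q a1 a2 a3 a4 : fa := P a1 e_one ++ P a2 e_t ++ P a3 e_tw ++ P a4 e_wt.
Definition R M := Q (r1 M) (r2 M) (r3 M) (r4 M).

Lemma LpD p q e z : coef (P (p + q) e) z = coef (P p e) z + coef (P q e) z.
Proof. by rewrite -P_add fc_cat. Qed.
Lemma LpN p e z : coef (P (- p) e) z = - coef (P p e) z.
Proof. by rewrite -P_opp fc_opp. Qed.
Lemma Lp0 e z : coef (P 0 e) z = 0.
Proof. by rewrite P0 fc_nil. Qed.
Lemma Lp_zeta p e z : coef (P p (fa_mul zeta e)) z = coef (P ('X * p) e) z.
Proof. exact: P_zeta. Qed.
Lemma Lp_ope p e z : coef (P p (fa_opp e)) z = coef (P (- p) e) z.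
Proof. exact: P_opp_e. Qed.
Lemma Lp_cat p e1 e2 z : coef (P p (e1 ++ e2)) z = coef (P p e1) z + coef (P p e2) z.
Proof. by rewrite P_cat_e fc_cat. Qed.
Lemma LpZ c p e z : coef (P (c%:P * p) e) z = c * coef (P p e) z.
Proof.
rewrite (@fc_P_ge _ (size p)); last by rewrite mul_polyC size_scale_leq.
rewrite fc_P mulr_sumr; apply: eq_bigr => i _; by rewrite coefCM mulrA.
Qed.

Lemma lm_Q b a1 a2 a3 a4 : E_eq (lm b (Q a1 a2 a3 a4))
  (P a1 (lm b e_one) ++ P a2 (lm b e_t) ++ P a3 (lm b e_tw) ++ P a4 (lm b e_wt)).
Proof.
rewrite /Q.
apply: (Eeq_feql (feq_sym (lm_cat _ _ _))); apply: Eeq_cat; first exact: lm_P.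
apply: (Eeq_feql (feq_sym (lm_cat _ _ _))); apply: Eeq_cat; first exact: lm_P.
apply: (Eeq_feql (feq_sym (lm_cat _ _ _))); apply: Eeq_cat; exact: lm_P.
Qed.
Lemma P4_Eeq a1 a2 a3 a4 e1 e2 e3 e4 f1 f2 f3 f4 :
  E_eq e1 f1 -> E_eq e2 f2 -> E_eq e3 f3 -> E_eq e4 f4 ->
  E_eq (P a1 e1 ++ P a2 e2 ++ P a3 e3 ++ P a4 e4) (P a1 f1 ++ P a2 f2 ++ P a3 f3 ++ P a4 f4).
Proof. by move=> h1 h2 h3 h4; do 3 (apply: Eeq_cat; first exact: P_Eeq_e); exact: P_Eeq_e. Qed.

Ltac ent := rewrite /i0 /i1 /= ?mulE !mxE /=.

Lemma stepT M : E_eq (lm true (R M)) (R (Tmat k * M)).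
Proof.
apply: Eeq_trans (lm_Q _ _ _ _ _) _.
apply: Eeq_trans (P4_Eeq _ _ _ _ (@L1 k) (@L2 k) (@L3 k) (@L4 k)) _.
apply: feq_Eeq => z.
have e1 : r1 (Tmat k * M) = 0 by rewrite /r1; ent; ring.
have e3 : r3 (Tmat k * M) = - r3 M by rewrite /r3; ent; ring.
have e4 : r4 (Tmat k * M) = 0.
  by rewrite /r4; ent; rewrite !mul0r addr0 div0p oppr0.
have e2 : r2 (Tmat k * M) = r1 M - r2 M + 'X * r4 M.
  rewrite /r2 e1 e3 e4 /r1 /r2; ent; ring.
rewrite /R /Q e1 e2 e3 e4 !fc_cat !Lp0 !Lp_ope !Lp_zeta !LpD !LpN; ring.
Qed.

Lemma C5 p z : coef (P p (fa_mul zeta e_one ++ fa_opp e_wt ++ fa_opp e_tw)) z =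
  coef (P ('X * p) e_one) z - coef (P p e_wt) z - coef (P p e_tw) z.
Proof.
rewrite (Lp_cat p (fa_mul zeta e_one)) (Lp_cat p (fa_opp e_wt)) Lp_zeta !Lp_ope !LpN; ring.
Qed.
Lemma C7 p z : coef (P p (fa_mul zeta (fa_mul zeta e_one) ++ fa_opp (fa_mul zeta e_wt)
   ++ fa_opp (fa_mul zeta e_tw) ++ fa_opp e_one ++ fa_opp e_t)) z =
  coef (P ('X * ('X * p)) e_one) z - coef (P ('X * p) e_wt) z - coef (P ('X * p) e_tw) z
  - coef (P p e_one) z - coef (P p e_t) z.
Proof.
rewrite (Lp_cat p (fa_mul zeta (fa_mul zeta e_one))) (Lp_cat p (fa_opp (fa_mul zeta e_wt))).
rewrite (Lp_cat p (fa_opp (fa_mul zeta e_tw))) (Lp_cat p (fa_opp e_one)).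
rewrite !Lp_ope !LpN !Lp_zeta.
rewrite ?mulrN ?LpN; ring.
Qed.

Lemma stepW M : dd %| M i0 i1 -> E_eq (lm false (R M)) (R (Wmat k * M)).
Proof.
move=> hd.
apply: Eeq_trans (lm_Q _ _ _ _ _) _.
apply: Eeq_trans (P4_Eeq _ _ _ _ (@L5 k) (@L6 k) (@L7 k) (@L8 k)) _.
apply: feq_Eeq => z.
set qq := M i0 i1 %/ dd.
have hm : M i0 i1 = qq * dd by rewrite divpK.
have e1 : r1 (Wmat k * M) = 'X * r1 M + 'X * ('X * r3 M) - r3 M by rewrite /r1 /r3; ent; ring.
have e3 : r3 (Wmat k * M) = - r1 M - 'X * r3 M by rewrite /r1 /r3; ent; ring.
have h01 : (Wmat k * M) i0 i1 = ('X * qq + M i1 i1) * dd.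
  rewrite mulE.
  have -> : Wmat k i0 i0 = 'X by rewrite /Wmat mxE.
  have -> : Wmat k i0 i1 = 'X ^+ 2 - 1 by rewrite /Wmat mxE.
  rewrite hm /dd; ring.
have e4 : r4 (Wmat k * M) = - r1 M + r2 M - 'X * r3 M.
  rewrite /r4 h01 mulpK ?dd_neq0 // /r2 /r4 -/qq /r1 /r3; ring.
have e2 : r2 (Wmat k * M) = r4 M - r3 M.
  rewrite /r2 e1 e3 e4 /r2 /r4 -/qq /r1 /r3.
  have -> : (Wmat k * M) i1 i1 = - M i0 i1 - 'X * M i1 i1 by ent; ring.
  rewrite hm /dd; ring.
rewrite /R /Q e1 e2 e3 e4 !fc_cat C5 C7 !LpD !LpN; ring.
Qed.
End S4.

Section S5.
Variable k : fieldType.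
Local Notation fa := (fa k).
Local Notation coef := (@fa_coef k).
Local Notation M2 := ('M[{poly k}]_2).
Implicit Types (x y e : fa) (p q : {poly k}) (z : word) (A B M N : M2).
Local Notation sc c := ((c%:P)%:M : M2).
Local Notation pw := (@phi_word k).
Local Notation e_one := (@e_one k).
Local Notation zeta := (@zeta k).
Local Notation R := (@R k).
Local Notation wd := (@wd k).
Local Notation dd := (@dd k).

Lemma ord2 (i : 'I_2) : i = i0 \/ i = i1.
Proof. case: i => [[|[|//]] hi]; [left|right]; exact: val_inj. Qed.

Lemma r_add M N : [/\ r1 (M + N) = r1 M + r1 N, r2 (M + N) = r2 M + r2 N,
  r3 (M + N) = r3 M + r3 N & r4 (M + N) = r4 M + r4 N].
Proof.
have h1 : r1 (M + N) = r1 M + r1 N by rewrite /r1 mxE.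
have h3 : r3 (M + N) = r3 M + r3 N by rewrite /r3 mxE.
have h4 : r4 (M + N) = r4 M + r4 N by rewrite /r4 mxE divpD opprD.
split => //; rewrite /r2 h1 h3 h4 mxE; ring.
Qed.
Lemma R_add M N : feq (R (M + N)) (R M ++ R N).
Proof.
move=> z; have [h1 h2 h3 h4] := r_add M N.
rewrite /R /Q h1 h2 h3 h4 !fc_cat !LpD; ring.
Qed.
Lemma r_scale c M : [/\ r1 (sc c * M) = c%:P * r1 M, r2 (sc c * M) = c%:P * r2 M,
  r3 (sc c * M) = c%:P * r3 M & r4 (sc c * M) = c%:P * r4 M].
Proof.
have hE i j : (sc c * M) i j = c%:P * M i j by rewrite -mulmxE mul_scalar_mx mxE.
have h1 : r1 (sc c * M) = c%:P * r1 M by rewrite /r1 hE.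
have h3 : r3 (sc c * M) = c%:P * r3 M by rewrite /r3 hE.
have h4 : r4 (sc c * M) = c%:P * r4 M by rewrite /r4 hE !mul_polyC divpZl scalerN.
split => //; rewrite /r2 h1 h3 h4 hE; ring.
Qed.
Lemma R_scale c M : feq (R (sc c * M)) (fa_scale c (R M)).
Proof.
move=> z; have [h1 h2 h3 h4] := r_scale c M.
rewrite fc_scale /R /Q h1 h2 h3 h4 !fc_cat !LpZ; ring.
Qed.
Lemma R0 : feq (R 0) [::].
Proof.
move=> z.
have e1 : r1 (0 : M2) = 0 by rewrite /r1 mxE.
have e3 : r3 (0 : M2) = 0 by rewrite /r3 mxE.
have e4 : r4 (0 : M2) = 0 by rewrite /r4 mxE div0p oppr0.
have e2 : r2 (0 : M2) = 0 by rewrite /r2 e1 e3 e4 mxE mulr0 !addr0 subrr.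
by rewrite /R /Q e1 e2 e3 e4 !fc_cat !Lp0 fc_nil !addr0.
Qed.

Lemma word_R u : E_eq (wd u) (R (pw u)) /\ dd %| (pw u) i0 i1.
Proof.
elim: u => [|b u [IH1 IH2]].
  rewrite pw_nil; split; last by rewrite mxE /= mulr0n dvdp0.
  apply: feq_Eeq => z.
  have e1 : r1 (1 : M2) = 1 by rewrite /r1 mxE.
  have e3 : r3 (1 : M2) = 0 by rewrite /r3 mxE.
  have e4 : r4 (1 : M2) = 0 by rewrite /r4 mxE /= mulr0n div0p oppr0.
  have e2 : r2 (1 : M2) = 0 by rewrite /r2 e1 e3 e4 mxE /= mulr0 !addr0 subrr.
  rewrite /R /Q e1 e2 e3 e4 !fc_cat !Lp0 !addr0 fc_P size_poly1 /= big_cons big_nil.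
  by rewrite coef1 mul1r addr0.
rewrite pw_cons; set M := pw u.
have hw : feq (wd (b :: u)) (lm b (wd u)).
  by move=> z; rewrite /lm /= !fc_cons fc_nil mul1r.
split.
  apply: Eeq_feql (feq_sym hw) _; apply: Eeq_trans (Eeq_mull _ IH1) _.
  clear hw; case: b; [exact: stepT | exact: stepW].
clear hw; case: b; rewrite mulE.
  rewrite /Tmat !mxE /= !mul0r addr0; exact: dvdp0.
rewrite /Wmat !mxE /=; apply: dvdp_add; first exact: dvdp_mull.
exact: dvdp_mulr (dvdpp _).
Qed.

Lemma x_R x : E_eq x (R (phi x)).
Proof.
elim: x => [|[c u] x IH].
  rewrite phi_nil; apply: feq_Eeq; exact: feq_sym R0.
rewrite phi_cons /=.
apply: Eeq_feqr (feq_sym (R_add _ _)) _.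
change ((c, u) :: x) with ([:: (c, u)] ++ x); apply: Eeq_cat => //.
apply: Eeq_feqr (feq_sym (R_scale _ _)) _.
apply: Eeq_feql (_ : feq (fa_scale c (wd u)) [:: (c, u)]) _.
  by move=> z; rewrite /= !fc_cons fc_nil mulr1.
exact: Eeq_scale (proj1 (word_R u)).
Qed.

Lemma phi_inj x y : phi x = phi y -> E_eq x y.
Proof.
move=> h; apply: Eeq_trans (x_R x) _; rewrite h; exact: Eeq_sym (x_R y).
Qed.

Lemma phi_wd1 b : phi (wd [:: b]) = if b then Tmat k else Wmat k.
Proof. by rewrite phi_cons phi_nil addr0 /= pw_cons pw_nil mulr1 mul1r. Qed.

Lemma centre x : E_central x -> exists q : {poly k}, phi x = q%:M.
Proof.
move=> hc.
have hT := phi_wd (hc (wd [:: true])); have hW := phi_wd (hc (wd [:: false])).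
rewrite !phi_mul !phi_wd1 in hT hW.
move: (phi x) hT hW => M hT hW.
have a01 := congr1 (fun A : M2 => A i0 i1) hT.
have a10 := congr1 (fun A : M2 => A i1 i0) hT.
have b01 := congr1 (fun A : M2 => A i0 i1) hW.
rewrite /= !mulE /Tmat !mxE /= in a01 a10.
rewrite /= !mulE /Wmat !mxE /= in b01.
have m01 : M i0 i1 = 0.
  by move: a01; rewrite ?mulr0 ?mul0r ?add0r ?addr0 ?mulrN1 => /eqP; rewrite oppr_eq0 => /eqP.
have m10 : M i1 i0 = 0.
  by move: a10; rewrite ?mulr0 ?mul0r ?add0r ?addr0 ?mulN1r => /eqP; rewrite eq_sym oppr_eq0 => /eqP.
have m11 : M i0 i0 = M i1 i1.
  move: b01; rewrite m01 mul0r mulr0 addr0 add0r mulrC => h.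
  by apply: (mulIf (@dd_neq0 k)); rewrite /dd mulrC h mulrC.
exists (M i0 i0); apply/matrixP => i j.
have [->|->] := ord2 i; have [->|->] := ord2 j; rewrite mxE /= ?mulr1n ?mulr0n //.
Qed.


Lemma phi_zeta : phi zeta = 'X%:M.
Proof.
rewrite /zeta !phi_cons phi_nil /= !pw_cons pw_nil !mulr1 !mul1r addr0.
apply/matrixP => i j; rewrite !mxE !big_ord_recl !big_ord0 !mxE.
have [->|->] := ord2 i; have [->|->] := ord2 j; rewrite /i0 /i1 /= ?mulr1n ?mulr0n; ring.
Qed.
Lemma phi_flat (T : Type) (f : T -> fa) s : phi (flatten (map f s)) = \sum_(i <- s) phi (f i).
Proof. elim: s => [|a s IH] /=; by rewrite ?big_nil ?phi_nil // big_cons phi_cat IH. Qed.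
Lemma smM (a b : {poly k}) : (a * b)%:M = a%:M * b%:M :> M2.
Proof. exact: scalar_mxM. Qed.
Lemma phi_zp i e : phi (zp i e) = ('X ^+ i)%:M * phi e.
Proof.
elim: i => [|i IH] /=; first by rewrite expr0 mul1r.
by rewrite phi_mul phi_zeta IH mulrA -smM exprS.
Qed.
Lemma sum_coefX q : \sum_(i <- iota 0 (size q)) (q`_i)%:P * 'X ^+ i = q.
Proof.
have := @big_mkord _ 0 +%R (size q) xpredT (fun i => (q`_i)%:P * 'X ^+ i).
rewrite /index_iota subn0 => ->.
rewrite -[RHS]coefK poly_def; apply: eq_bigr => i _; by rewrite mul_polyC.
Qed.
Lemma phi_P q e : phi (P q e) = q%:M * phi e.
Proof.
rewrite /P phi_flat.
under eq_bigr => i _ do rewrite phi_scale phi_zp mulrA -smM.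
by rewrite -mulr_suml -raddf_sum sum_coefX.
Qed.
Lemma phi_one : phi e_one = 1.
Proof. by rewrite phi_cons phi_nil addr0 pw_nil mulr1. Qed.

Lemma onto q : exists x, E_central x /\ phi x = q%:M.
Proof.
exists (P q e_one); split; last by rewrite phi_P phi_one mulr1.
move=> y; apply: phi_inj; rewrite !phi_mul phi_P phi_one mulr1.
by rewrite -!mulmxE scalar_mxC.
Qed.
End S5.

Theorem proposition3p8 (p : nat) (k : closedFieldType)
  (hp : prime p) (hchar : p \in [pchar k])
  (halg : forall x : k, exists n : nat, (0 < n)%N /\ x ^+ (p ^ n) = x) :
  (* the map phi is well defined on E = k<t,w>/(t^2+t, w^2-1) *)
  (forall x y : fa k, E_eq x y -> phi x = phi y) /\
  (* it is injective on E *)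
  (forall x y : fa k, phi x = phi y -> E_eq x y) /\
  (* it maps Z(E) into the scalar matrices k[X].Id ... *)
  (forall x : fa k, E_central x -> exists q : {poly k}, phi x = q%:M) /\
  (* ... and onto them *)
  (forall q : {poly k}, exists x : fa k, E_central x /\ phi x = q%:M).
Proof.
split; first exact: phi_wd.
split; first exact: phi_inj.
split; first exact: centre.
exact: onto.
Qed.
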